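(* Define $f:[0,1]\times[0,1]\to[0,1]$ by $$f(x,y)=\begin{cases} x, & \text{if } y\le \tfrac12 \text{ (and } x\in[0,1]\text{ arbitrary), or if } x\ge \tfrac12 \text{ (and } y\in[0,1]\text{ arbitrary)},\\ \tfrac12(2x)^{1+\varepsilon}, & \text{if } y=\tfrac12+\varepsilon \text{ with } \varepsilon>0 \text{ and } x\le\tfrac12.\end{cases}$$ Then $([0,1],f)$ is a topological quandle (with the standard topology on $[0,1]$).
   Context: A topological rack is a topological space $X$ with a map $f:X\times X\to X$ such that $f$ is continuous, for every $y\in X$ the right multiplication $R_y:X\to X$, $x\mapsto f(x,y)$, is a homeomorphism, and $f(f(x,y),z)=f(f(x,z),f(y,z))$ for all $x,y,z\in X$. A topological quandle is a topological rack which in addition satisfies $f(x,x)=x$ for all $x\in X$. *)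

(* Defs.v *)
From HB Require Import structures.
From mathcomp Require Import all_boot all_order all_algebra.
From mathcomp Require Import all_classical all_reals all_analysis.
Set Implicit Arguments. Unset Strict Implicit. Unset Printing Implicit Defensive.
Import Order.TTheory GRing.Theory Num.Theory.
Import numFieldNormedType.Exports.
Local Open Scope classical_set_scope.
Local Open Scope ring_scope.

Definition homeo_on (T : topologicalType) (A : set T) (h : T -> T) : Prop :=
  exists g : T -> T,
    [/\ (forall x, A x -> A (h x)) /\ (forall x, A x -> A (g x)),
        (forall x, A x -> g (h x) = x) /\ (forall x, A x -> h (g x) = x),
        {within A, continuous h} & {within A, continuous g}].

Definition topological_rack_on (T : topologicalType) (A : set T)
    (op : T -> T -> T) : Prop :=
  [/\ (forall x y, A x -> A y -> A (op x y)),
      {within A `*` A, continuous (fun p : T * T => op p.1 p.2)},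
      (forall y, A y -> homeo_on A (fun x => op x y)) &
      (forall x y z, A x -> A y -> A z ->
         op (op x y) z = op (op x z) (op y z))].

Definition topological_quandle_on (T : topologicalType) (A : set T)
    (op : T -> T -> T) : Prop :=
  topological_rack_on A op /\ (forall x, A x -> op x x = x).

(* The operation of the statement; with y = 1/2 + eps, 1 + eps = y + 1/2. *)
Definition fq (R : realType) (x y : R) : R :=
  if (y <= 2^-1) || (2^-1 <= x) then x
  else 2^-1 * powR (2 * x) (y + 2^-1).

(* Main.v *)
Require Import Defs.
From HB Require Import structures.
From mathcomp Require Import all_boot all_order all_algebra.
From mathcomp Require Import all_classical all_reals all_analysis.
Import Order.TTheory GRing.Theory Num.Theory.
Import numFieldNormedType.Exports.
Local Open Scope classical_set_scope.
Local Open Scope ring_scope.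
Set Implicit Arguments. Unset Strict Implicit.

Lemma powR_cont (R : realType) (T : topologicalType) (phi e : T -> R) t :
  {for t, continuous phi} -> {for t, continuous e} ->
  (forall s, 0 <= phi s) -> 0 < e t ->
  {for t, continuous (fun s => powR (phi s) (e s))}.
Proof.
move=> cphi ce phi0 et0.
have [pt0|] := ltP 0 (phi t); last first.
  move=> pt; have {}pt : phi t = 0 by apply/le_anti; rewrite pt phi0.
  rewrite /prop_for /continuous_at /= pt powR0 ?gt_eqF//.
  have cphi0 : phi @ t --> 0 by rewrite -pt.
  apply/cvgr0Pnorm_lt => eps eps0.
  set c := e t / 2.
  have c0 : 0 < c by rewrite divr_gt0.
  set delta := Num.min 1 (powR eps c^-1).
  have d0 : 0 < delta by rewrite lt_min ltr01 powR_gt0.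
  near=> s.
  have hp : phi s < delta by near: s; exact: cvgr_lt cphi0 _ d0.
  have he : c < e s by near: s; apply: cvgr_gt ce _ _; rewrite /c ltr_pdivrMr// ltr_pMr// ltr1n.
  rewrite ger0_norm ?powR_ge0//.
  have [ps0|] := eqVneq (phi s) 0.
    by rewrite ps0 powR0// gt_eqF// (lt_trans c0 he).
  move=> psn0; have ps0 : 0 < phi s by rewrite lt_neqAle eq_sym psn0 phi0.
  have hp1 : phi s <= 1 by rewrite ltW// (lt_le_trans hp)// ge_min lexx.
  apply: (le_lt_trans (ger_powR _ (ltW he))); first by rewrite ps0 hp1.
  have : phi s < powR eps c^-1 by rewrite (lt_le_trans hp)// ge_min lexx orbT.
  move=> /(gt0_ltr_powR c0); rewrite -powRrM mulVf ?gt_eqF// powRr1 ?ltW//.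
  by apply; rewrite nnegrE ?powR_ge0 ?phi0.
have H : {for t, continuous (fun s => expR (e s * ln (phi s)))}.
  apply: (@continuous_comp _ _ _ (fun s => e s * ln (phi s)) expR).
    apply: continuousM => //.
    exact: (continuous_comp cphi (continuous_ln pt0)).
  exact: continuous_expR.
rewrite /prop_for /continuous_at /= {2}/powR gt_eqF//.
apply: cvg_trans H.
apply: near_eq_cvg; near=> s.
have : 0 < phi s by near: s; exact: cvgr_gt cphi _ pt0.
by rewrite /powR => /gt_eqF ->.
Unshelve. all: by end_near.
Qed.

Section S.
Variable R : realType.

Lemma half2 : 2^-1 + 2^-1 = 1 :> R.
Proof. by rewrite -div1r -mulrDl divff // pnatr_eq0. Qed.

Definition mm (x : R) := Num.max 0 (Num.min x 2^-1).
Definition qq (y : R) := Num.max y 2^-1 + 2^-1.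
Definition psi (c x : R) := if x < 2^-1 then 2^-1 * powR (2 * x) c else x.
Definition Gf (c x : R) := x - mm x + 2^-1 * powR (2 * mm x) c.

Lemma mcont (T : topologicalType) (a : T -> R) t :
  {for t, continuous a} -> {for t, continuous (fun s => mm (a s))}.
Proof.
move=> ca.
apply: (@continuous_max _ _ (fun=> 0) (fun s => Num.min (a s) 2^-1)).
  exact: cvg_cst.
apply: (@continuous_min _ _ a (fun=> 2^-1)) => //; exact: cvg_cst.
Qed.

Lemma Gcont (T : topologicalType) (a b : T -> R) t :
  {for t, continuous a} -> {for t, continuous b} -> 0 < b t ->
  {for t, continuous (fun s => Gf (b s) (a s))}.
Proof.
move=> ca cb bt.
have cm := mcont ca.
apply: continuousD; first exact: continuousB.
apply: continuousM; first exact: cvg_cst.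
apply: powR_cont => //.
  apply: continuousM => //; exact: cvg_cst.
by move=> s; rewrite mulr_ge0// /mm le_max lexx.
Qed.

Lemma psiE c x : 0 <= x -> psi c x = Gf c x.
Proof.
move=> x0; rewrite /psi /Gf /mm.
have [xl|xg] := ltP x 2^-1.
  by rewrite (max_idPr x0) subrr add0r.
rewrite max_r ?invr_ge0 ?ler0n// mulfV ?pnatr_eq0// powR1 mulr1 subrK//.
Qed.

Lemma psi1 x : 0 <= x -> psi 1 x = x.
Proof.
move=> x0; rewrite /psi; case: ifP => // _.
by rewrite powRr1 ?mulr_ge0// mulrA mulVf ?pnatr_eq0// mul1r.
Qed.

Lemma fqE x y : 0 <= x -> fq x y = psi (qq y) x.
Proof.
move=> x0; rewrite /fq /psi /qq.
have [xl|xg] := ltP x 2^-1; last by rewrite orbT.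
have [yl|yg] := leP y 2^-1.
  by rewrite /= half2; have := psi1 x0; rewrite /psi xl.
by [].
Qed.

Lemma psi_small c x : 0 <= x < 2^-1 -> 0 < c -> 0 <= psi c x < 2^-1.
Proof.
move=> /andP[x0 xl] c0; rewrite /psi xl mulr_ge0 ?invr_ge0 ?ler0n ?powR_ge0//=.
rewrite -[X in _ < X]mulr1 ltr_pM2l ?invr_gt0 ?ltr0n//.
have [->|xn0] := eqVneq x 0; first by rewrite mulr0 powR0 ?gt_eqF.
rewrite [X in _ < X](_ : _ = powR 1 c); last by rewrite powR1.
apply: gt0_ltr_powR; rewrite ?nnegrE ?mulr_ge0 // ?ler01 //.
by rewrite -ltr_pdivlMl ?ltr0n// mulr1.
Qed.

Lemma psi_big c x : 2^-1 <= x -> psi c x = x.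
Proof. by move=> xg; rewrite /psi ltNge xg. Qed.

Lemma psiM c d x : 0 <= x -> 0 < c -> 0 < d -> psi d (psi c x) = psi (c * d) x.
Proof.
move=> x0 c0 d0.
have [xl|xg] := ltP x 2^-1; last by rewrite !psi_big.
have /andP[p0 pl] : 0 <= psi c x < 2^-1 by apply: psi_small; rewrite ?x0 ?xl.
rewrite {1}/psi pl {1}/psi xl mulrA mulfV ?pnatr_eq0// mul1r -powRrM.
by rewrite /psi xl.
Qed.

Lemma psi_in c x : 0 < c -> 0 <= x <= 1 -> 0 <= psi c x <= 1.
Proof.
move=> c0 /andP[x0 x1].
have [xl|xg] := ltP x 2^-1; last by rewrite psi_big// x0 x1.
have /andP[p0 pl] : 0 <= psi c x < 2^-1 by apply: psi_small; rewrite ?x0 ?xl.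
rewrite p0 ltW// (lt_le_trans pl)// invf_le1 ?ler1n// ltr0n.
Qed.

Lemma qq_gt0 y : 0 < qq y.
Proof. by rewrite /qq ltr_wpDl ?le_max ?invr_ge0 ?ler0n ?orbT// invr_gt0 ltr0n. Qed.

Lemma qq_small w : w <= 2^-1 -> qq w = 1.
Proof. by move=> h; rewrite /qq max_r// half2. Qed.

Lemma qq_fq y z : 0 <= y -> qq (fq y z) = qq y.
Proof.
move=> y0; rewrite fqE//.
have [yl|yg] := ltP y 2^-1; last by rewrite psi_big.
have /andP[p0 pl] : 0 <= psi (qq z) y < 2^-1 by apply: psi_small; rewrite ?y0 ?yl ?qq_gt0.
by rewrite (qq_small (ltW pl)) (qq_small (ltW yl)).
Qed.

End S.

Theorem mainTheorem1 (R : realType) :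
  topological_quandle_on `[(0:R), 1] (@fq R).
Proof.
have inA (x : R) : (`[(0:R), 1]%classic x) <-> 0 <= x <= 1 by rewrite /= in_itv.
split; last first.
  move=> x _; rewrite /fq; have [h|h] := leP x 2^-1; first by [].
  by rewrite ltW ?orbT.
split.
- move=> x y /inA Ax /inA Ay; apply/inA.
  rewrite (@fqE R x y); last by case/andP: Ax.
  exact: psi_in (qq_gt0 _) Ax.
- apply: (@subspace_eq_continuous _ _ _ (fun p : R * R => Gf (qq p.2) p.1)).
    move=> [x y]; rewrite inE => -[/inA/andP[x0 _] _]; rewrite /from_subspace /= in x0 *.
    by rewrite fqE // psiE.
  apply: continuous_subspaceT => p.
  apply: (@Gcont _ _ fst (fun p : R * R => qq p.2)); last exact: qq_gt0.
    exact: cvg_fst.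
  apply: continuousD; last exact: cvg_cst.
  apply: (@continuous_max _ _ snd (fun=> 2^-1)); last exact: cvg_cst.
  exact: cvg_snd.
- move=> y /inA Ay.
  have q0 := qq_gt0 y.
  have qi0 : 0 < (qq y)^-1 by rewrite invr_gt0.
  exists (psi (qq y)^-1); split.
  + split => x /inA Ax; apply/inA.
      by rewrite fqE ?psi_in//; case/andP: Ax.
    by rewrite psi_in.
  + split => x /inA /andP[x0 x1].
      by rewrite fqE// psiM// mulfV ?gt_eqF// psi1.
    rewrite fqE ?psiM ?mulVf ?gt_eqF ?psi1//.
    by have /andP[] := psi_in qi0 (introT andP (conj x0 x1)).
  + apply: (@subspace_eq_continuous _ _ _ (fun x => Gf (qq y) x)).
      by move=> x; rewrite inE => /inA/andP[x0 _]; rewrite /from_subspace /= fqE// psiE.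
    apply: continuous_subspaceT => x.
    apply: (@Gcont _ _ id (fun=> qq y)) => //; exact: cvg_cst.
  + apply: (@subspace_eq_continuous _ _ _ (fun x => Gf (qq y)^-1 x)).
      by move=> x; rewrite inE => /inA/andP[x0 _]; rewrite /from_subspace /= psiE.
    apply: continuous_subspaceT => x.
    apply: (@Gcont _ _ id (fun=> (qq y)^-1)) => //; exact: cvg_cst.
- move=> x y z /inA/andP[x0 x1] /inA/andP[y0 y1] /inA/andP[z0 z1].
  have fx w : 0 <= fq x w.
    by rewrite fqE//; have /andP[] := psi_in (qq_gt0 w) (introT andP (conj x0 x1)).
  rewrite fqE// [fq (fq x z) _]fqE// qq_fq// !fqE// !psiM ?qq_gt0//.
  by rewrite mulrC.
Qed.
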